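(* For any Bessel sequence $\{x_k\}_{k=1}^\infty$ in the real or complex space $\ell_2$, the family $\{\tilde{x}_k\}_{k=1}^\infty$ is a Bessel sequence in $\tilde{\mathbb{H}}$. However, $\{\tilde{x}_k\}_{k=1}^\infty$ is not a frame for $\tilde{\mathbb{H}}$.
   Context: A sequence $\{y_k\}$ in a Hilbert space $K$ is Bessel if there is $B<\infty$ with $\sum_k|\langle y,y_k\rangle|^2\le B\|y\|^2$ for all $y\in K$; it is a frame if additionally there is $A>0$ with $A\|y\|^2\le\sum_k|\langle y,y_k\rangle|^2$. Let $\tilde{\mathbb{H}}=\left(\sum_{i=1}^\infty\oplus\ell_2\right)_{\ell_2}$ be the $\ell_2$-direct sum of countably many copies of real $\ell_2$, with inner product $\langle(\vec{x}_i),(\vec{y}_i)\rangle=\sum_i\langle\vec{x}_i,\vec{y}_i\rangle$. For $x=(x_i)\in\ell_2$, $\tilde{x}=(\vec{x}_1,\vec{x}_2,\dots)\in\tilde{\mathbb{H}}$ where, in the real case, $\vec{x}_n=(x_nx_n,x_nx_{n+1},x_nx_{n+2},\dots)$, and in the complex case, $\vec{x}_n=(|x_n|^2,\mathrm{Re}(\bar{x}_nx_{n+1}),\mathrm{Im}(\bar{x}_nx_{n+1}),\mathrm{Re}(\bar{x}_nx_{n+2}),\mathrm{Im}(\bar{x}_nx_{n+2}),\dots)$. *)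

(* Defs.v *)
From Stdlib Require Import Reals.
From Coquelicot Require Import Coquelicot.
Open Scope R_scope.

Definition l2R (x : nat -> R) : Prop := ex_series (fun i => (x i) ^ 2).
Definition normR2 (x : nat -> R) : R := Series (fun i => (x i) ^ 2).
Definition innR (x y : nat -> R) : R := Series (fun i => x i * y i).

Definition l2C (x : nat -> C) : Prop := ex_series (fun i => (Cmod (x i)) ^ 2).
Definition normC2 (x : nat -> C) : R := Series (fun i => (Cmod (x i)) ^ 2).
Definition innC (x y : nat -> C) : C :=
  (Series (fun i => Re (Cmult (x i) (Cconj (y i)))),
   Series (fun i => Im (Cmult (x i) (Cconj (y i))))).

(* ---------- H~ = (sum_i (+) real l2)_{l2} ; elements : nat -> nat -> R ---------- *)
Definition inHt (u : nat -> nat -> R) : Prop :=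
  (forall i, ex_series (fun j => (u i j) ^ 2)) /\
  ex_series (fun i => Series (fun j => (u i j) ^ 2)).
Definition normHt2 (u : nat -> nat -> R) : R :=
  Series (fun i => Series (fun j => (u i j) ^ 2)).
Definition innHt (u v : nat -> nat -> R) : R :=
  Series (fun i => Series (fun j => u i j * v i j)).

Definition BesselR (x : nat -> nat -> R) : Prop :=
  (forall k, l2R (x k)) /\
  exists B : R, forall y, l2R y ->
    ex_series (fun k => (innR y (x k)) ^ 2) /\
    Series (fun k => (innR y (x k)) ^ 2) <= B * normR2 y.

Definition BesselC (x : nat -> nat -> C) : Prop :=
  (forall k, l2C (x k)) /\
  exists B : R, forall y, l2C y ->
    ex_series (fun k => (Cmod (innC y (x k))) ^ 2) /\
    Series (fun k => (Cmod (innC y (x k))) ^ 2) <= B * normC2 y.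

Definition BesselHt (x : nat -> nat -> nat -> R) : Prop :=
  (forall k, inHt (x k)) /\
  exists B : R, forall y, inHt y ->
    ex_series (fun k => (innHt y (x k)) ^ 2) /\
    Series (fun k => (innHt y (x k)) ^ 2) <= B * normHt2 y.

Definition FrameHt (x : nat -> nat -> nat -> R) : Prop :=
  BesselHt x /\
  exists A : R, 0 < A /\ forall y, inHt y ->
    A * normHt2 y <= Series (fun k => (innHt y (x k)) ^ 2).

Definition tildeR (x : nat -> R) : nat -> nat -> R :=
  fun n j => x n * x (n + j)%nat.

(* complex case: x~_n = (|x_n|^2, Re(conj x_n x_{n+1}), Im(conj x_n x_{n+1}),
   Re(conj x_n x_{n+2}), Im(conj x_n x_{n+2}), ...) *)
Definition tildeC (x : nat -> C) : nat -> nat -> R :=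
  fun n j => match j with
  | O => (Cmod (x n)) ^ 2
  | S j' => let z := Cmult (Cconj (x n)) (x (n + (Nat.div2 j' + 1))%nat) in
            if Nat.even j' then Re z else Im z
  end.

(* Main.v *)
Require Import Defs.
From Stdlib Require Import Reals.
From Coquelicot Require Import Coquelicot.
From Stdlib Require Import Lra Lia Psatz.
Open Scope R_scope.

Lemma ser_lim a l : is_series a l <-> is_lim_seq (fun n => sum_f_R0 a n) l.
Proof. rewrite is_series_Reals, is_lim_seq_Reals. unfold infinite_sum, Un_cv. tauto. Qed.

Lemma ex_ser_lim a : ex_series a -> is_lim_seq (fun n => sum_f_R0 a n) (Series a).
Proof. intro H. apply ser_lim, Series_correct, H. Qed.

Lemma pos_bound (a : nat -> R) M : (forall n, 0 <= a n) -> (forall N, sum_f_R0 a N <= M) ->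
  ex_series a /\ Series a <= M.
Proof.
  intros Hp Hb.
  assert (Hinc: forall n, sum_f_R0 a n <= sum_f_R0 a (S n))
    by (intro n; simpl; specialize (Hp (S n)); lra).
  destruct (ex_finite_lim_seq_incr _ M Hinc Hb) as [l Hl].
  assert (Hs: is_series a l) by (apply ser_lim; exact Hl).
  split. exists l; exact Hs.
  rewrite (is_series_unique _ _ Hs).
  assert (H := is_lim_seq_le _ _ _ _ Hb Hl (is_lim_seq_const M)). simpl in H. exact H.
Qed.

Lemma pos_partial (a : nat -> R) N : (forall n, 0 <= a n) -> ex_series a -> sum_f_R0 a N <= Series a.
Proof.
  intros Hp He. apply (is_lim_seq_incr_compare (fun n => sum_f_R0 a n)).
  apply ex_ser_lim, He. intro n; simpl; specialize (Hp (S n)); lra.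
Qed.

Lemma sum_ge_term (a : nat -> R) n : (forall n, 0 <= a n) -> a n <= sum_f_R0 a n.
Proof. intros Hp. destruct n; simpl. lra.
  assert (0 <= sum_f_R0 a n) by (apply cond_pos_sum; auto). lra. Qed.

Lemma pos_term a n : (forall n, 0 <= a n) -> ex_series a -> a n <= Series a.
Proof. intros. eapply Rle_trans. apply sum_ge_term; auto. apply pos_partial; auto. Qed.

Lemma pos_Series a : (forall n, 0 <= a n) -> ex_series a -> 0 <= Series a.
Proof. intros. eapply Rle_trans. apply (H 0%nat). apply pos_term; auto. Qed.

Lemma sum_mono (a : nat -> R) N M : (forall n, 0 <= a n) -> (N <= M)%nat -> sum_f_R0 a N <= sum_f_R0 a M.
Proof. intros Hp H. induction H. lra. simpl. specialize (Hp (S m)). lra. Qed.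

Lemma is_series_sum (f : nat -> nat -> R) (l : nat -> R) K :
  (forall k, is_series (f k) (l k)) ->
  is_series (fun n => sum_f_R0 (fun k => f k n) K) (sum_f_R0 l K).
Proof.
  intro H. induction K; simpl.
  - apply H.
  - assert (H1 := proj1 (ser_lim _ _) (H (S K))). apply ser_lim in IHK. apply ser_lim.
    eapply is_lim_seq_ext. 2: apply (is_lim_seq_plus' _ _ _ _ IHK H1).
    intro n. simpl. symmetry. apply sum_plus.
Qed.

Lemma Series_sum (f : nat -> nat -> R) K :
  (forall k, ex_series (f k)) ->
  ex_series (fun n => sum_f_R0 (fun k => f k n) K) /\
  Series (fun n => sum_f_R0 (fun k => f k n) K) = sum_f_R0 (fun k => Series (f k)) K.
Proof.
  intro H. assert (Hs := is_series_sum f (fun k => Series (f k)) K (fun k => Series_correct _ (H k))).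
  split. eexists; exact Hs. apply is_series_unique, Hs.
Qed.

Lemma is_lin (a b : nat -> R) la lb c d : is_series a la -> is_series b lb ->
  is_series (fun n => c * a n + d * b n) (c * la + d * lb).
Proof.
  intros Ha Hb. apply ser_lim in Ha. apply ser_lim in Hb. apply ser_lim.
  eapply is_lim_seq_ext. 2: apply (is_lim_seq_plus' _ _ _ _ (is_lim_seq_scal_l _ c _ Ha) (is_lim_seq_scal_l _ d _ Hb)).
  intro n. simpl. induction n; simpl. ring. rewrite <- IHn. ring.
Qed.

Lemma ex_lin (a b : nat -> R) c d : ex_series a -> ex_series b ->
  ex_series (fun n => c * a n + d * b n) /\
  Series (fun n => c * a n + d * b n) = c * Series a + d * Series b.
Proof.
  intros Ha Hb. assert (H := is_lin a b _ _ c d (Series_correct _ Ha) (Series_correct _ Hb)).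
  split. eexists; exact H. apply is_series_unique, H.
Qed.

Lemma cmp (a b : nat -> R) : (forall n, Rabs (a n) <= b n) -> ex_series b ->
  ex_series a /\ Rabs (Series a) <= Series b.
Proof.
  intros H Hb.
  assert (Ha: ex_series (fun n => Rabs (a n))).
  { apply (@ex_series_le R_AbsRing R_CompleteNormedModule _ b); auto. intro n. change (Rabs (Rabs (a n)) <= b n).
    rewrite Rabs_Rabsolu. auto. }
  split. apply ex_series_Rabs, Ha.
  eapply Rle_trans. apply Series_Rabs, Ha. apply Series_le; auto.
  intro n; split; [apply Rabs_pos | auto].
Qed.

Lemma quad A C D : 0 <= D -> (forall t, 0 <= A + 2*t*C + t^2*D) -> C^2 <= A*D.
Proof.
  intros HD H. destruct (Rle_lt_or_eq_dec 0 D HD) as [Hp|Hz].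
  - specialize (H (-C/D)).
    assert (E: A + 2*(-C/D)*C + (-C/D)^2*D = (A*D - C^2)/D) by (field; lra).
    rewrite E in H. apply Rmult_le_compat_r with (r:=D) in H; [|lra].
    unfold Rdiv in H. rewrite Rmult_assoc, Rinv_l, Rmult_1_r in H by lra. lra.
  - subst D. destruct (Req_dec C 0). subst; nra.
    specialize (H (-(A+1)/(2*C))).
    assert (E: A + 2*(-(A+1)/(2*C))*C + (-(A+1)/(2*C))^2*0 = -1) by (field; auto). lra.
Qed.

Lemma ab_le a b : Rabs (a * b) <= (a^2 + b^2)/2.
Proof. assert (0 <= (a-b)^2) by apply pow2_ge_0. assert (0 <= (a+b)^2) by apply pow2_ge_0.
 destruct (Rcase_abs (a*b)) as [h|h]; [rewrite Rabs_left by lra|rewrite Rabs_right by lra]; lra. Qed.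

Lemma CS (a b : nat -> R) : ex_series (fun n => a n ^ 2) -> ex_series (fun n => b n ^ 2) ->
  ex_series (fun n => a n * b n) /\
  (Series (fun n => a n * b n))^2 <= Series (fun n => a n ^2) * Series (fun n => b n ^2).
Proof.
  intros Ha Hb.
  assert (Hab: ex_series (fun n => a n * b n)).
  { destruct (ex_lin _ _ (/2) (/2) Ha Hb) as [E _].
    refine (proj1 (cmp _ _ _ E)). intro n. eapply Rle_trans. apply ab_le. lra. }
  split; auto.
  apply quad. apply pos_Series; auto. intro; apply pow2_ge_0.
  intro t.
  destruct (ex_lin _ _ 1 (2*t) Ha Hab) as [E1 S1].
  destruct (ex_lin _ _ 1 (t^2) E1 Hb) as [E2 S2].
  rewrite S1 in S2.
  assert (0 <= Series (fun n => 1 * (1 * a n ^ 2 + 2 * t * (a n * b n)) + t ^ 2 * b n ^ 2)).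
  { apply pos_Series; auto. intro n. 
    replace (1 * (1 * a n ^ 2 + 2 * t * (a n * b n)) + t ^ 2 * b n ^ 2) with ((a n + t * b n)^2) by ring.
    apply pow2_ge_0. }
  rewrite S2 in H. lra.
Qed.

Lemma CSabs (a b : nat -> R) : ex_series (fun n => a n ^ 2) -> ex_series (fun n => b n ^ 2) ->
  ex_series (fun n => Rabs (a n) * Rabs (b n)) /\
  (Series (fun n => Rabs (a n) * Rabs (b n)))^2 <= Series (fun n => a n ^2) * Series (fun n => b n ^2).
Proof.
  intros Ha Hb.
  assert (Ea: ex_series (fun n => Rabs (a n) ^ 2)) by (eapply ex_series_ext; [|exact Ha]; intro; rewrite pow2_abs; auto).
  assert (Eb: ex_series (fun n => Rabs (b n) ^ 2)) by (eapply ex_series_ext; [|exact Hb]; intro; rewrite pow2_abs; auto).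
  destruct (CS _ _ Ea Eb) as [H1 H2]. split; auto.
  rewrite (Series_ext (fun n => Rabs (a n) ^ 2) (fun n => a n ^2)) in H2 by (intro; apply pow2_abs).
  rewrite (Series_ext (fun n => Rabs (b n) ^ 2) (fun n => b n ^2)) in H2 by (intro; apply pow2_abs).
  exact H2.
Qed.

Lemma shift (a : nat -> R) n : (forall i, (i < n)%nat -> a i = 0) -> ex_series (fun j => a (n+j)%nat) ->
  ex_series a /\ Series a = Series (fun j => a (n+j)%nat).
Proof.
  intros Hz He. assert (Ea: ex_series a) by (apply (ex_series_incr_n a n); exact He).
  split; auto. destruct n.
  - apply Series_ext. intro; reflexivity.
  - rewrite (Series_incr_n a (S n)) by (auto || lia). simpl pred.
    rewrite sum_eq_R0. ring. intros i Hi. apply Hz. lia.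
Qed.

Lemma delta_sum (f : nat -> R) j0 : (forall j, j <> j0 -> f j = 0) ->
  forall N, sum_f_R0 f N = if (N <? j0)%nat then 0 else f j0.
Proof.
  intros H N. induction N; simpl.
  - destruct (Nat.ltb_spec 0 j0). apply H; lia. replace j0 with 0%nat by lia. auto.
  - rewrite IHN. destruct (Nat.ltb_spec N j0); destruct (Nat.ltb_spec (S N) j0).
    + rewrite (H (S N)) by lia. ring.
    + replace j0 with (S N) by lia. ring.
    + lia.
    + rewrite (H (S N)) by lia. ring.
Qed.

Lemma Series_delta (f : nat -> R) j0 : (forall j, j <> j0 -> f j = 0) ->
  ex_series f /\ Series f = f j0.
Proof.
  intro H. assert (Hs: is_series f (f j0)).
  { apply ser_lim. apply (is_lim_seq_incr_n _ j0).
    apply is_lim_seq_ext with (fun _ => f j0). 2: apply is_lim_seq_const.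
    intro n. rewrite (delta_sum f j0 H). destruct (Nat.ltb_spec (n + j0) j0). lia. auto. }
  split. eexists; exact Hs. apply is_series_unique, Hs.
Qed.

Lemma Series_zero : Series (fun _ => 0) = 0.
Proof. apply (proj2 (Series_delta (fun _ => 0) 0 (fun _ _ => eq_refl))). Qed.

Lemma interleave (f : nat -> R) : ex_series f ->
  ex_series (fun m => f (S (2*m)) + f (S (S (2*m)))) /\
  Series f = f 0%nat + Series (fun m => f (S (2*m)) + f (S (S (2*m)))).
Proof.
  intro Hf.
  assert (Hp: forall M, sum_f_R0 (fun m => f (S (2*m)) + f (S (S (2*m)))) M = sum_f_R0 f (S (S (2*M))) - f 0%nat).
  { induction M. simpl. ring. 
    rewrite tech5, IHM. replace (2 * S M)%nat with (S (S (2*M))) by lia. rewrite !tech5. ring. }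
  assert (Hs: is_series (fun m => f (S (2*m)) + f (S (S (2*m)))) (Series f - f 0%nat)).
  { assert (Hphi: forall n, (S (S (2*n)) < S (S (2 * S n)))%nat) by (intro; lia).
    apply ser_lim. eapply is_lim_seq_ext. intro M. symmetry. apply Hp.
    apply (is_lim_seq_plus' _ _ _ _ (is_lim_seq_subseq _ _ (fun M => S (S (2*M))) (eventually_subseq _ Hphi) (ex_ser_lim _ Hf)) (is_lim_seq_const (- f 0%nat))). }
  split. eexists; exact Hs. rewrite (is_series_unique _ _ Hs). ring.
Qed.

Lemma interleave_pos (f : nat -> R) : (forall j, 0 <= f j) ->
  ex_series (fun m => f (S (2*m)) + f (S (S (2*m)))) -> ex_series f.
Proof.
  intros Hp Hg.
  assert (Hq: forall M, sum_f_R0 (fun m => f (S (2*m)) + f (S (S (2*m)))) M = sum_f_R0 f (S (S (2*M))) - f 0%nat).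
  { induction M. simpl. ring. 
    rewrite tech5, IHM. replace (2 * S M)%nat with (S (S (2*M))) by lia. rewrite !tech5. ring. }
  refine (proj1 (pos_bound f (f 0%nat + Series (fun m => f (S (2*m)) + f (S (S (2*m))))) Hp _)).
  intro N. eapply Rle_trans. apply (sum_mono f N (S (S (2*N))) Hp). lia.
  assert (H := pos_partial _ N (fun m => Rplus_le_le_0_compat _ _ (Hp _) (Hp _)) Hg).
  rewrite Hq in H. lra.
Qed.

Lemma sum_scal (a : nat -> R) c N : sum_f_R0 (fun n => c * a n) N = c * sum_f_R0 a N.
Proof. induction N; simpl. ring. rewrite IHN. ring. Qed.

Lemma core_bessel (B : R) (V : nat -> nat -> R) (T W : nat -> R) :
  0 <= B ->
  (forall n, 0 <= W n) -> ex_series W ->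
  (forall n, ex_series (fun k => V k n ^ 2) /\ Series (fun k => V k n ^ 2) <= B * W n) ->
  (forall k, ex_series (fun n => V k n ^ 2) -> T k ^ 2 <= B * Series (fun n => V k n ^ 2)) ->
  ex_series (fun k => T k ^ 2) /\ Series (fun k => T k ^ 2) <= B * B * Series W.
Proof.
  intros HB HW EW HV HT.
  assert (HsW: forall N, sum_f_R0 (fun n => Series (fun k => V k n ^ 2)) N <= B * Series W).
  { intro N. apply Rle_trans with (sum_f_R0 (fun n => B * W n) N).
    - apply sum_Rle. intros n _. apply HV.
    - rewrite sum_scal. apply Rmult_le_compat_l; auto. apply pos_partial; auto. }
  assert (EV: forall k, ex_series (fun n => V k n ^ 2)).
  { intro k. refine (proj1 (pos_bound _ (B * Series W) (fun n => pow2_ge_0 _) _)).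
    intro N. eapply Rle_trans. 2: apply (HsW N). apply sum_Rle. intros n _.
    apply (pos_term (fun k => V k n ^ 2) k (fun _ => pow2_ge_0 _) (proj1 (HV n))). }
  apply pos_bound. intro; apply pow2_ge_0.
  intro K. apply Rle_trans with (sum_f_R0 (fun k => B * Series (fun n => V k n ^ 2)) K).
  { apply sum_Rle. intros k _. apply HT, EV. }
  rewrite sum_scal. rewrite Rmult_assoc. apply Rmult_le_compat_l; auto.
  destruct (Series_sum (fun k n => V k n ^ 2) K EV) as [_ E]. rewrite <- E.
  apply pos_bound.
  - intro n. apply cond_pos_sum. intro; apply pow2_ge_0.
  - intro N. eapply Rle_trans. 2: apply (HsW N). apply sum_Rle. intros n _.
    apply (pos_partial (fun k => V k n ^ 2)). intro; apply pow2_ge_0. apply HV.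
Qed.

Lemma core_nonframe (B A : R) (c : nat -> nat -> R) (s : nat -> R) :
  0 <= B -> 0 < A ->
  (forall m, ex_series (fun k => c m k ^ 2) /\ A <= Series (fun k => c m k ^ 2)) ->
  (forall k M, sum_f_R0 (fun m => c m k ^ 2) M <= B * s k) ->
  (forall k, 0 <= s k) -> ex_series s -> Series s <= B -> False.
Proof.
  intros HB HA Hc Hs Hs0 Es Ss.
  destruct (INR_archimed A (B * B) HA) as [n Hn].
  assert (H1: sum_f_R0 (fun _ => A) n <= sum_f_R0 (fun m => Series (fun k => c m k ^ 2)) n).
  { apply sum_Rle. intros; apply Hc. }
  destruct (Series_sum (fun m k => c m k ^ 2) n (fun m => proj1 (Hc m))) as [_ E].
  rewrite <- E in H1.
  assert (H2: Series (fun k => sum_f_R0 (fun m => c m k ^ 2) n) <= Series (fun k => B * s k)).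
  { apply Series_le. intro k. split. apply cond_pos_sum; intro; apply pow2_ge_0. apply Hs.
    destruct (ex_lin s s B 0 Es Es) as [E2 _]. eapply ex_series_ext. 2: exact E2. intro; simpl; ring. }
  rewrite Series_scal_l in H2.
  rewrite sum_cte, S_INR in H1.
  assert (H4: B * Series s <= B * B) by (apply Rmult_le_compat_l; auto).
  lra.
Qed.

Lemma ex_scal (a : nat -> R) c : ex_series a -> ex_series (fun n => c * a n) /\ Series (fun n => c * a n) = c * Series a.
Proof. intro H. split. destruct (ex_lin a a c 0 H H) as [E _]. eapply ex_series_ext. 2: exact E. intro; simpl; ring.
  apply Series_scal_l. Qed.

Lemma tail_le (a : nat -> R) n : (forall i, 0 <= a i) -> ex_series a -> Series (fun j => a (n+j)%nat) <= Series a.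
Proof. intros Hp He. destruct n. right. apply Series_ext. intro; reflexivity.
  rewrite (Series_incr_n a (S n)) by (auto || lia). assert (0 <= sum_f_R0 a (pred (S n))) by (apply cond_pos_sum; auto). lra. Qed.

Lemma row_delta (g : nat -> nat -> R) j0 : (forall i j, (i <> 0%nat \/ j <> j0) -> g i j = 0) ->
  (forall i, ex_series (g i)) /\ ex_series (fun i => Series (g i)) /\ Series (fun i => Series (g i)) = g 0%nat j0.
Proof.
  intro H. assert (Hi: forall i, ex_series (g i) /\ Series (g i) = g i j0).
  { intro i. apply Series_delta. intros j Hj. apply H; auto. }
  split. intro i; apply Hi.
  assert (E: forall i, Series (g i) = g i j0) by (intro; apply Hi).
  destruct (Series_delta (fun i => g i j0) 0%nat) as [H1 H2]. { intros i Hn. apply H; auto. }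
  split. eapply ex_series_ext. 2: exact H1. intro; symmetry; auto.
  rewrite (Series_ext _ _ E). auto.
Qed.

Definition ed (j0 : nat) : nat -> nat -> R := fun i j => if (Nat.eqb i 0 && Nat.eqb j j0)%bool then 1 else 0.

Lemma ed_zero j0 i j : (i <> 0%nat \/ j <> j0) -> ed j0 i j = 0.
Proof. intro H. unfold ed. destruct (Nat.eqb_spec i 0); destruct (Nat.eqb_spec j j0); simpl; auto. lia. Qed.

Lemma ed_props j0 v : inHt (ed j0) /\ normHt2 (ed j0) = 1 /\ innHt (ed j0) v = v 0%nat j0.
Proof.
  destruct (row_delta (fun i j => ed j0 i j ^ 2) j0) as [H1 [H2 H3]].
  { intros i j H. rewrite ed_zero by auto. ring. }
  destruct (row_delta (fun i j => ed j0 i j * v i j) j0) as [_ [_ H6]].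
  { intros i j H. rewrite ed_zero by auto. ring. }
  assert (E: ed j0 0 j0 = 1). { unfold ed. rewrite Nat.eqb_refl. simpl. rewrite Nat.eqb_refl. reflexivity. }
  split. split; auto. split. unfold normHt2. rewrite H3, E. ring.
  unfold innHt. rewrite H6, E. ring.
Qed.

Definition e0R : nat -> R := fun i => if Nat.eqb i 0 then 1 else 0.
Lemma e0R_props x : l2R e0R /\ normR2 e0R = 1 /\ innR e0R x = x 0%nat.
Proof.
  destruct (Series_delta (fun i => e0R i ^ 2) 0) as [H1 H2].
  { intros j Hj. unfold e0R. destruct (Nat.eqb_spec j 0). lia. ring. }
  destruct (Series_delta (fun i => e0R i * x i) 0) as [H3 H4].
  { intros j Hj. unfold e0R. destruct (Nat.eqb_spec j 0). lia. ring. }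
  split. exact H1. split. unfold normR2. rewrite H2. unfold e0R; simpl; ring. unfold innR. rewrite H4. unfold e0R; simpl; ring.
Qed.

Lemma sq_le (a b : R) : Rabs a <= b -> a ^ 2 <= b ^ 2.
Proof. intro H. rewrite <- pow2_abs. apply pow_incr. split. apply Rabs_pos. auto. Qed.

Lemma N_le (N B : R) : 0 <= N -> 0 <= B -> N ^ 2 <= B * N -> N <= B.
Proof. intros. destruct (Rle_lt_dec N B); auto. simpl in H1. nra. Qed.

Definition wsh (y : nat -> nat -> R) (n : nat) : nat -> R :=
  fun i => if (i <? n)%nat then 0 else y n (i - n)%nat.

Lemma wsh_shift y n j : wsh y n (n + j) = y n j.
Proof. unfold wsh. destruct (Nat.ltb_spec (n+j) n). lia. f_equal. lia. Qed.

Lemma wsh_zero y n i : (i < n)%nat -> wsh y n i = 0.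
Proof. intro. unfold wsh. destruct (Nat.ltb_spec i n). auto. lia. Qed.

Theorem real_part (x : nat -> nat -> R) : BesselR x ->
  BesselHt (fun k => tildeR (x k)) /\ ~ FrameHt (fun k => tildeR (x k)).
Proof.
  intros [Hl [B HB]].
  set (B0 := Rmax B 0).
  assert (HB0 : 0 <= B0) by apply Rmax_r.
  assert (Hn0: forall y, l2R y -> 0 <= normR2 y).
  { intros y Hy. apply pos_Series; auto. intro; apply pow2_ge_0. }
  assert (HB': forall y, l2R y -> ex_series (fun k => innR y (x k) ^ 2) /\
       Series (fun k => innR y (x k) ^ 2) <= B0 * normR2 y).
  { intros y Hy. destruct (HB y Hy) as [H1 H2]. split; auto. eapply Rle_trans. apply H2.
    apply Rmult_le_compat_r. auto. apply Rmax_l. }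
  clear HB.
  assert (HN: forall k, normR2 (x k) <= B0).
  { intro k. apply N_le; auto. destruct (HB' (x k) (Hl k)) as [H1 H2].
    eapply Rle_trans. 2: exact H2.
    replace (normR2 (x k)) with (innR (x k) (x k)).
    apply (pos_term (fun k0 => innR (x k) (x k0) ^ 2) k); auto. intro; apply pow2_ge_0.
    unfold innR, normR2. apply Series_ext. intro; simpl; ring. }
  assert (Hin: forall k, inHt (tildeR (x k))).
  { intro k. unfold tildeR.
    assert (Hr: forall n, ex_series (fun j => (x k n * x k (n + j)%nat) ^ 2) /\
                  Series (fun j => (x k n * x k (n + j)%nat) ^ 2) <= normR2 (x k) * x k n ^ 2).
    { intro n. assert (Et: ex_series (fun j => x k (n+j)%nat ^ 2)) by (apply (ex_series_incr_n (fun i => x k i ^ 2)); apply Hl).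
      destruct (ex_scal _ (x k n ^ 2) Et) as [E1 S1].
      split. eapply ex_series_ext. 2: exact E1. intro; simpl; ring.
      rewrite (Series_ext _ (fun j => x k n ^ 2 * x k (n + j)%nat ^ 2)) by (intro; simpl; ring).
      rewrite S1. rewrite Rmult_comm. apply Rmult_le_compat_r. apply pow2_ge_0.
      apply (tail_le (fun i => x k i ^ 2)). intro; apply pow2_ge_0. apply Hl. }
    split. intro n; apply Hr.
    destruct (ex_scal (fun n => x k n ^ 2) (normR2 (x k)) (Hl k)) as [E1 _].
    refine (proj1 (cmp _ _ _ E1)). intro n. rewrite Rabs_right. apply Hr.
    apply Rle_ge, pos_Series. intro; apply pow2_ge_0. apply Hr. }
  assert (HBt: BesselHt (fun k => tildeR (x k))).
  { split. exact Hin. exists (B0 * B0). intros y [Hy1 Hy2].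
    assert (Hw: forall n, l2R (wsh y n) /\ normR2 (wsh y n) = Series (fun j => y n j ^ 2)).
    { intro n. destruct (shift (fun i => wsh y n i ^ 2) n) as [H1 H2].
      intros i Hi. rewrite wsh_zero by auto. ring.
      eapply ex_series_ext. 2: apply (Hy1 n). intro j. rewrite wsh_shift. auto.
      split. exact H1. unfold normR2. rewrite H2. apply Series_ext. intro j. rewrite wsh_shift. auto. }
    apply (core_bessel B0 (fun k n => innR (wsh y n) (x k)) (fun k => innHt y (tildeR (x k))) (fun n => Series (fun j => y n j ^ 2))); auto.
    - intro n. apply pos_Series. intro; apply pow2_ge_0. auto.
    - intro n. destruct (Hw n) as [Hw1 Hw2]. rewrite <- Hw2. apply HB'. auto.
    - intros k EV.
      assert (Hrow: forall n, Series (fun j => y n j * tildeR (x k) n j) = x k n * innR (wsh y n) (x k)).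
      { intro n. unfold innR.
        destruct (CS (y n) (fun j => x k (n + j)%nat)) as [E1 _]. apply Hy1.
        apply (ex_series_incr_n (fun i => x k i ^ 2)); apply Hl.
        destruct (shift (fun i => wsh y n i * x k i) n) as [_ H2].
        intros i Hi. rewrite wsh_zero by auto. ring.
        eapply ex_series_ext. 2: exact E1. intro j. rewrite wsh_shift. auto.
        rewrite H2. rewrite <- Series_scal_l. apply Series_ext. intro j. rewrite wsh_shift.
        unfold tildeR. ring. }
      destruct (CSabs (x k) (fun n => innR (wsh y n) (x k)) (Hl k) EV) as [E1 S1].
      destruct (cmp (fun n => Series (fun j => y n j * tildeR (x k) n j)) _ (fun n => Req_le _ _ (eq_trans (f_equal Rabs (Hrow n)) (Rabs_mult _ _))) E1) as [_ H2].
      apply Rle_trans with (Series (fun n => Rabs (x k n) * Rabs (innR (wsh y n) (x k)))^2).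
      apply sq_le. exact H2.
      eapply Rle_trans. exact S1. apply Rmult_le_compat_r. apply pos_Series; auto. intro; apply pow2_ge_0.
      apply HN. }
  split. exact HBt.
  intros [_ [A [HA Hf]]].
  destruct HBt as [_ [B1 HB1]].
  apply (core_nonframe B0 A (fun m k => x k 0%nat * x k m) (fun k => x k 0%nat ^ 2)); auto.
  - intro m. destruct (ed_props m (fun _ _ => 0)) as [Hi [Hn _]].
    destruct (HB1 _ Hi) as [E1 _]. specialize (Hf _ Hi). rewrite Hn in Hf. cbv beta in Hf, E1.
    assert (Ee: forall k, innHt (ed m) (tildeR (x k)) = x k 0%nat * x k m).
    { intro k. destruct (ed_props m (tildeR (x k))) as [_ [_ H]]. rewrite H. reflexivity. }
    split. eapply ex_series_ext. 2: exact E1. intro k. simpl. rewrite Ee. auto.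
    rewrite <- (Series_ext _ _ (fun k => f_equal (fun r => r ^ 2) (Ee k))). lra.
  - intros k M. apply Rle_trans with (x k 0%nat ^ 2 * normR2 (x k)).
    apply Rle_trans with (sum_f_R0 (fun m => x k 0%nat ^ 2 * x k m ^ 2) M).
    right. apply sum_eq. intros; simpl; ring.
    rewrite sum_scal. apply Rmult_le_compat_l. apply pow2_ge_0. apply pos_partial. intro; apply pow2_ge_0. apply Hl.
    rewrite Rmult_comm. apply Rmult_le_compat_r. apply pow2_ge_0. apply HN.
  - intro; apply pow2_ge_0.
  - destruct (e0R_props (fun _ => 0)) as [Hi [Hn _]]. destruct (HB' _ Hi) as [E1 S1].
    assert (Ee: forall k, innR e0R (x k) = x k 0%nat). { intro k. apply e0R_props. }
    eapply ex_series_ext. 2: exact E1. intro k. simpl. rewrite Ee. auto.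
  - destruct (e0R_props (fun _ => 0)) as [Hi [Hn _]]. destruct (HB' _ Hi) as [E1 S1].
    assert (Ee: forall k, innR e0R (x k) = x k 0%nat). { intro k. apply e0R_props. }
    rewrite (Series_ext _ _ (fun k => f_equal (fun r => r ^ 2) (Ee k))) in S1. rewrite Hn in S1. lra.
Qed.

Lemma abs_le_of_sq r c : 0 <= c -> r ^ 2 <= c ^ 2 -> Rabs r <= c.
Proof. intros Hc H. rewrite <- pow2_abs in H. destruct (Rle_lt_dec (Rabs r) c); auto.
  assert (0 <= Rabs r) by apply Rabs_pos. simpl in H. nra. Qed.

Lemma Cmod2 (z : C) : Cmod z ^ 2 = fst z ^ 2 + snd z ^ 2.
Proof. apply Cmod2_alt. Qed.

Lemma re_le (z : C) : Rabs (fst z) <= Cmod z.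
Proof. apply abs_le_of_sq. apply Cmod_ge_0. rewrite Cmod2. assert (0 <= snd z ^ 2) by apply pow2_ge_0. lra. Qed.
Lemma im_le (z : C) : Rabs (snd z) <= Cmod z.
Proof. apply abs_le_of_sq. apply Cmod_ge_0. rewrite Cmod2. assert (0 <= fst z ^ 2) by apply pow2_ge_0. lra. Qed.

Lemma lag (z w : C) : Rabs (fst z * fst w - snd z * snd w) <= Cmod z * Cmod w.
Proof. apply abs_le_of_sq. apply Rmult_le_pos; apply Cmod_ge_0.
  rewrite Rpow_mult_distr, !Cmod2.
  assert (0 <= (fst z * snd w + snd z * fst w)^2) by apply pow2_ge_0.
  assert (E: (fst z ^ 2 + snd z ^ 2) * (fst w ^ 2 + snd w ^ 2) = (fst z * fst w - snd z * snd w) ^ 2 + (fst z * snd w + snd z * fst w)^2) by ring.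
  lra. Qed.

Lemma Cmod_cm (a b : C) : Cmod (Cmult (Cconj a) b) ^ 2 = Cmod a ^ 2 * Cmod b ^ 2.
Proof. rewrite Cmod_mult, Cmod_conj. ring. Qed.

Lemma prod_ex (a b : nat -> C) : l2C a -> l2C b ->
  (forall f : C -> R, (forall z, Rabs (f z) <= Cmod z) -> ex_series (fun i => f (Cmult (a i) (Cconj (b i))))).
Proof.
  intros Ha Hb f Hf. destruct (ex_lin _ _ (/2) (/2) Ha Hb) as [E _].
  refine (proj1 (cmp _ _ _ E)). intro n. eapply Rle_trans. apply Hf.
  rewrite Cmod_mult, Cmod_conj. eapply Rle_trans. apply Rle_abs. eapply Rle_trans. apply ab_le. lra.
Qed.

Lemma tc_S x n j : tildeC x n (S j) = if Nat.even j then fst (Cmult (Cconj (x n)) (x (n + (Nat.div2 j + 1))%nat))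
   else snd (Cmult (Cconj (x n)) (x (n + (Nat.div2 j + 1))%nat)).
Proof. reflexivity. Qed.

Lemma tc_odd x n m : tildeC x n (S (2*m)) = fst (Cmult (Cconj (x n)) (x (n + S m)%nat)).
Proof. rewrite tc_S, Nat.even_even, Nat.div2_double. do 3 f_equal. lia. Qed.

Lemma tc_even x n m : tildeC x n (S (S (2*m))) = snd (Cmult (Cconj (x n)) (x (n + S m)%nat)).
Proof. rewrite tc_S, Nat.even_succ, Nat.odd_even, Nat.div2_succ_double. do 3 f_equal. lia. Qed.

Lemma tc_0 x n : tildeC x n 0 = Cmod (x n) ^ 2.
Proof. reflexivity. Qed.

Lemma tc_pair x n m : tildeC x n (S (2*m)) ^ 2 + tildeC x n (S (S (2*m))) ^ 2 = Cmod (x n) ^ 2 * Cmod (x (n + S m)%nat) ^ 2.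
Proof. rewrite tc_odd, tc_even, <- Cmod_cm, Cmod2. reflexivity. Qed.

Lemma tail1_le (a : nat -> R) n : (forall i, 0 <= a i) -> ex_series a -> Series (fun m => a (n + S m)%nat) <= Series a.
Proof. intros. rewrite (Series_ext _ (fun m => a (S n + m)%nat)) by (intro; f_equal; lia). apply tail_le; auto. Qed.

Definition dsh (y : nat -> nat -> R) (n : nat) : nat -> C :=
  fun i => if (i <? n)%nat then (0,0) else
    match (i - n)%nat with O => (y n 0%nat, 0) | S m => (y n (S (2*m)), y n (S (S (2*m)))) end.

Lemma dsh_zero y n i : (i < n)%nat -> dsh y n i = (0,0).
Proof. intro. unfold dsh. destruct (Nat.ltb_spec i n). auto. lia. Qed.
Lemma dsh_0 y n : dsh y n (n + 0)%nat = (y n 0%nat, 0).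
Proof. unfold dsh. destruct (Nat.ltb_spec (n+0) n). lia. replace (n + 0 - n)%nat with 0%nat by lia. auto. Qed.
Lemma dsh_S y n m : dsh y n (n + S m)%nat = (y n (S (2*m)), y n (S (S (2*m)))).
Proof. unfold dsh. destruct (Nat.ltb_spec (n + S m) n). lia. replace (n + S m - n)%nat with (S m) by lia. auto. Qed.

Lemma dsh_norm y n : ex_series (fun j => y n j ^ 2) ->
  l2C (dsh y n) /\ normC2 (dsh y n) = Series (fun j => y n j ^ 2).
Proof.
  intro Hy. destruct (interleave _ Hy) as [Eg Sg].
  assert (Et: ex_series (fun j => Cmod (dsh y n (n + j)%nat) ^ 2)).
  { apply ex_series_incr_1. eapply ex_series_ext. 2: exact Eg. intro m. cbv beta.
    rewrite dsh_S, Cmod2. reflexivity. }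
  destruct (shift (fun i => Cmod (dsh y n i) ^ 2) n) as [H1 H2].
  { intros i Hi. cbv beta. rewrite dsh_zero by auto. rewrite Cmod2. simpl fst; simpl snd. ring. }
  exact Et.
  split. exact H1. unfold normC2. rewrite H2, Series_incr_1 by exact Et.
  rewrite Sg, dsh_0, Cmod2. simpl fst; simpl snd. f_equal. ring.
  apply Series_ext. intro m. rewrite dsh_S, Cmod2. simpl. ring.
Qed.

Definition e0C : nat -> C := fun i => if Nat.eqb i 0 then (1,0) else (0,0).
Lemma e0C_props x : l2C e0C /\ normC2 e0C = 1 /\ Cmod (innC e0C x) ^ 2 = Cmod (x 0%nat) ^ 2.
Proof.
  destruct (Series_delta (fun i => Cmod (e0C i) ^ 2) 0) as [H1 H2].
  { intros j Hj. unfold e0C. destruct (Nat.eqb_spec j 0). lia. rewrite Cmod2. simpl. ring. }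
  destruct (Series_delta (fun i => Re (Cmult (e0C i) (Cconj (x i)))) 0) as [_ H4].
  { intros j Hj. unfold e0C. destruct (Nat.eqb_spec j 0). lia. simpl. ring. }
  destruct (Series_delta (fun i => Im (Cmult (e0C i) (Cconj (x i)))) 0) as [_ H6].
  { intros j Hj. unfold e0C. destruct (Nat.eqb_spec j 0). lia. simpl. ring. }
  split. exact H1. split. unfold normC2. rewrite H2. rewrite Cmod2. unfold e0C; simpl; ring.
  unfold innC. rewrite H4, H6, !Cmod2. unfold e0C; simpl; ring.
Qed.

Lemma innC_self z : innC z z = (normC2 z, 0).
Proof. unfold innC, normC2. f_equal. apply Series_ext; intro i; rewrite Cmod2; simpl; ring.
  rewrite <- Series_zero. apply Series_ext; intro; simpl; ring. Qed.

Theorem cplx_part (x : nat -> nat -> C) : BesselC x ->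
  BesselHt (fun k => tildeC (x k)) /\ ~ FrameHt (fun k => tildeC (x k)).
Proof.
  intros [Hl [B HB]].
  set (B0 := Rmax B 0).
  assert (HB0 : 0 <= B0) by apply Rmax_r.
  assert (Hn0: forall y, l2C y -> 0 <= normC2 y).
  { intros y Hy. apply pos_Series; auto. intro; apply pow2_ge_0. }
  assert (HB': forall y, l2C y -> ex_series (fun k => Cmod (innC y (x k)) ^ 2) /\
       Series (fun k => Cmod (innC y (x k)) ^ 2) <= B0 * normC2 y).
  { intros y Hy. destruct (HB y Hy) as [H1 H2]. split; auto. eapply Rle_trans. apply H2.
    apply Rmult_le_compat_r. auto. apply Rmax_l. }
  clear HB.
  assert (HN: forall k, normC2 (x k) <= B0).
  { intro k. apply N_le; auto. destruct (HB' (x k) (Hl k)) as [H1 H2].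
    eapply Rle_trans. 2: exact H2.
    replace (normC2 (x k) ^ 2) with (Cmod (innC (x k) (x k)) ^ 2).
    apply (pos_term (fun k0 => Cmod (innC (x k) (x k0)) ^ 2) k); auto. intro; apply pow2_ge_0.
    rewrite innC_self, Cmod2. simpl. ring. }
  assert (Hin: forall k, inHt (tildeC (x k))).
  { intro k.
    assert (Hr: forall n, ex_series (fun j => tildeC (x k) n j ^ 2) /\
                  Series (fun j => tildeC (x k) n j ^ 2) <= 2 * normC2 (x k) * Cmod (x k n) ^ 2).
    { intro n.
      assert (Et: ex_series (fun m => Cmod (x k (n + S m)%nat) ^ 2)).
      { eapply ex_series_ext. 2: apply (proj1 (ex_series_incr_n (fun i => Cmod (x k i) ^ 2) (S n)) (Hl k)).
        intro m. cbv beta. replace (S n + m)%nat with (n + S m)%nat by lia. reflexivity. }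
      destruct (ex_scal _ (Cmod (x k n) ^ 2) Et) as [Eg Sg].
      assert (Eg': ex_series (fun m => tildeC (x k) n (S (2*m)) ^ 2 + tildeC (x k) n (S (S (2*m))) ^ 2)).
      { eapply ex_series_ext. 2: exact Eg. intro m. rewrite tc_pair. reflexivity. }
      assert (Ef: ex_series (fun j => tildeC (x k) n j ^ 2)).
      { apply interleave_pos. intro; apply pow2_ge_0. exact Eg'. }
      split. exact Ef.
      destruct (interleave _ Ef) as [_ Sf]. rewrite Sf.
      rewrite (Series_ext _ (fun m => Cmod (x k n) ^ 2 * Cmod (x k (n + S m)%nat) ^ 2)) by (intro m; apply tc_pair).
      rewrite Sg, tc_0.
      assert (H1: Cmod (x k n) ^ 2 <= normC2 (x k)).
      { apply (pos_term (fun i => Cmod (x k i) ^ 2)). intro; apply pow2_ge_0. apply Hl. }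
      assert (H2: Series (fun m => Cmod (x k (n + S m)%nat) ^ 2) <= normC2 (x k)).
      { apply (tail1_le (fun i => Cmod (x k i) ^ 2)). intro; apply pow2_ge_0. apply Hl. }
      assert (H0: 0 <= Cmod (x k n) ^ 2) by apply pow2_ge_0.
      assert (H3: (Cmod (x k n) ^ 2) ^ 2 <= normC2 (x k) * Cmod (x k n) ^ 2).
      { replace ((Cmod (x k n) ^ 2) ^ 2) with (Cmod (x k n) ^ 2 * Cmod (x k n) ^ 2) by ring.
        apply Rmult_le_compat_r; auto. }
      assert (H4: Cmod (x k n) ^ 2 * Series (fun m => Cmod (x k (n + S m)%nat) ^ 2) <= normC2 (x k) * Cmod (x k n) ^ 2).
      { rewrite Rmult_comm. apply Rmult_le_compat_r; auto. }
      lra. }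
    split. intro n; apply Hr.
    destruct (ex_scal (fun n => Cmod (x k n) ^ 2) (2 * normC2 (x k)) (Hl k)) as [E1 _].
    refine (proj1 (cmp _ _ _ E1)). intro n. rewrite Rabs_right. apply Hr.
    apply Rle_ge, pos_Series. intro; apply pow2_ge_0. apply Hr. }
  assert (HBt: BesselHt (fun k => tildeC (x k))).
  { split. exact Hin. exists (B0 * B0). intros y [Hy1 Hy2].
    apply (core_bessel B0 (fun k n => Cmod (innC (dsh y n) (x k))) (fun k => innHt y (tildeC (x k))) (fun n => Series (fun j => y n j ^ 2))); auto.
    - intro n. apply pos_Series. intro; apply pow2_ge_0. auto.
    - intro n. destruct (dsh_norm y n (Hy1 n)) as [Hd1 Hd2]. rewrite <- Hd2. apply HB'. auto.
    - intros k EV.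
      assert (Hrow: forall n, Rabs (Series (fun j => y n j * tildeC (x k) n j)) <= Cmod (x k n) * Cmod (innC (dsh y n) (x k))).
      { intro n.
        assert (Hrow_eq: Series (fun j => y n j * tildeC (x k) n j) = fst (x k n) * fst (innC (dsh y n) (x k)) - snd (x k n) * snd (innC (dsh y n) (x k))).
        { assert (Ef: ex_series (fun j => y n j * tildeC (x k) n j)).
          { destruct (ex_lin _ _ (/2) (/2) (Hy1 n) (proj1 (Hin k) n)) as [E _].
            refine (proj1 (cmp _ _ _ E)). intro j. eapply Rle_trans. apply ab_le. lra. }
          destruct (interleave _ Ef) as [_ Sf]. rewrite Sf. clear Sf.
          destruct (dsh_norm y n (Hy1 n)) as [Hd1 _].
          set (Rr := fun i => Re (Cmult (dsh y n i) (Cconj (x k i)))).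
          set (Ii := fun i => Im (Cmult (dsh y n i) (Cconj (x k i)))).
          assert (ER: ex_series Rr) by (apply (prod_ex _ _ Hd1 (Hl k)); intro z; apply re_le).
          assert (EI: ex_series Ii) by (apply (prod_ex _ _ Hd1 (Hl k)); intro z; apply im_le).
          assert (ERn: ex_series (fun j => Rr (n + j)%nat)) by (apply ex_series_incr_n; exact ER).
          assert (EIn: ex_series (fun j => Ii (n + j)%nat)) by (apply ex_series_incr_n; exact EI).
          change (fst (innC (dsh y n) (x k))) with (Series Rr).
          change (snd (innC (dsh y n) (x k))) with (Series Ii).
          rewrite (proj2 (shift Rr n (fun i Hi => ltac:(unfold Rr; rewrite dsh_zero by exact Hi; simpl; ring)) ERn)).
          rewrite (proj2 (shift Ii n (fun i Hi => ltac:(unfold Ii; rewrite dsh_zero by exact Hi; simpl; ring)) EIn)).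
          rewrite (Series_incr_1 _ ERn), (Series_incr_1 _ EIn).
          assert (ERS: ex_series (fun m => Rr (n + S m)%nat)) by (apply (ex_series_incr_1 (fun j => Rr (n + j)%nat)); exact ERn).
          assert (EIS: ex_series (fun m => Ii (n + S m)%nat)) by (apply (ex_series_incr_1 (fun j => Ii (n + j)%nat)); exact EIn).
          destruct (ex_lin _ _ (fst (x k n)) (- snd (x k n)) ERS EIS) as [_ SL].
          assert (SE: Series (fun m => y n (S (2 * m)) * tildeC (x k) n (S (2 * m)) + y n (S (S (2 * m))) * tildeC (x k) n (S (S (2 * m))))
                      = Series (fun m => fst (x k n) * Rr (n + S m)%nat + - snd (x k n) * Ii (n + S m)%nat)).
          { apply Series_ext. intro m. unfold Rr, Ii. rewrite tc_odd, tc_even, dsh_S. simpl. ring. }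
          rewrite SE, SL. unfold Rr, Ii. rewrite tc_0, dsh_0, Cmod2. cbn [fst snd Re Im Cmult Cconj]. rewrite !Nat.add_0_r. ring. }
        rewrite Hrow_eq. apply lag. }
      destruct (CSabs (fun n => Cmod (x k n)) (fun n => Cmod (innC (dsh y n) (x k))) (Hl k) EV) as [E1 S1].
      assert (Hb: forall n, Rabs (Series (fun j => y n j * tildeC (x k) n j)) <= Rabs (Cmod (x k n)) * Rabs (Cmod (innC (dsh y n) (x k)))).
      { intro n. rewrite (Rabs_pos_eq (Cmod (x k n))) by apply Cmod_ge_0. rewrite (Rabs_pos_eq (Cmod (innC _ _))) by apply Cmod_ge_0. apply Hrow. }
      destruct (cmp _ _ Hb E1) as [_ H2].
      apply Rle_trans with (Series (fun n => Rabs (Cmod (x k n)) * Rabs (Cmod (innC (dsh y n) (x k))))^2).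
      apply sq_le. exact H2.
      eapply Rle_trans. exact S1. apply Rmult_le_compat_r. apply pos_Series; auto. intro; apply pow2_ge_0.
      apply HN. }
  split. exact HBt.
  intros [_ [A [HA Hf]]].
  destruct HBt as [_ [B1 HB1]].
  apply (core_nonframe B0 A (fun m k => tildeC (x k) 0%nat (S (2*m))) (fun k => Cmod (x k 0%nat) ^ 2)); auto.
  - intro m. destruct (ed_props (S (2*m)) (fun _ _ => 0)) as [Hi [Hn _]].
    destruct (HB1 _ Hi) as [E1 _]. specialize (Hf _ Hi). rewrite Hn in Hf. cbv beta in Hf, E1.
    assert (Ee: forall k, innHt (ed (S (2*m))) (tildeC (x k)) = tildeC (x k) 0%nat (S (2*m))).
    { intro k. destruct (ed_props (S (2*m)) (tildeC (x k))) as [_ [_ H]]. rewrite H. reflexivity. }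
    split. eapply ex_series_ext. 2: exact E1. intro k. simpl. rewrite Ee. auto.
    rewrite <- (Series_ext _ _ (fun k => f_equal (fun r => r ^ 2) (Ee k))). lra.
  - intros k M. apply Rle_trans with (sum_f_R0 (fun m => Cmod (x k 0%nat) ^ 2 * Cmod (x k (S m)) ^ 2) M).
    { apply sum_Rle. intros m _. rewrite tc_odd. change (0 + S m)%nat with (S m). rewrite <- Cmod_cm. rewrite (Cmod2 (Cmult _ _)).
      assert (0 <= snd (Cmult (Cconj (x k 0%nat)) (x k (S m))) ^ 2) by apply pow2_ge_0. lra. }
    rewrite sum_scal. rewrite (Rmult_comm B0). apply Rmult_le_compat_l. apply pow2_ge_0.
    eapply Rle_trans. 2: apply (HN k).
    assert (H1 := decomp_sum (fun i => Cmod (x k i) ^ 2) (S M) (ltac:(lia))). simpl pred in H1.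
    assert (H2 := pos_partial (fun i => Cmod (x k i) ^ 2) (S M) (fun _ => pow2_ge_0 _) (Hl k)).
    assert (H3: 0 <= Cmod (x k 0%nat) ^ 2) by apply pow2_ge_0.
    unfold normC2. lra.
  - intro; apply pow2_ge_0.
  - destruct (e0C_props (fun _ => (0,0))) as [Hi [Hn _]]. destruct (HB' _ Hi) as [E1 S1].
    eapply ex_series_ext. 2: exact E1. intro k. simpl. apply e0C_props.
  - destruct (e0C_props (fun _ => (0,0))) as [Hi [Hn _]]. destruct (HB' _ Hi) as [E1 S1].
    rewrite (Series_ext _ _ (fun k => proj2 (proj2 (e0C_props (x k))))) in S1. rewrite Hn in S1. lra.
Qed.

Theorem mainTheorem13 :
  (forall x : nat -> nat -> R, BesselR x ->
     BesselHt (fun k => tildeR (x k)) /\ ~ FrameHt (fun k => tildeR (x k))) /\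
  (forall x : nat -> nat -> C, BesselC x ->
     BesselHt (fun k => tildeC (x k)) /\ ~ FrameHt (fun k => tildeC (x k))).
Proof. split. exact real_part. exact cplx_part. Qed.
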